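(* Let $(\mathbf w,\mathbf b)$ be weights and biases of a PNN with architecture $(\mathbf d,\mathbf r)$, and let $\widetilde{\mathbf w}=(\widetilde W_1,\dots,\widetilde W_L)$ with $\widetilde W_\ell=\begin{bmatrix}W_\ell&\mathbf b_\ell\\0&1\end{bmatrix}$ for $\ell<L$ and $\widetilde W_L=\begin{bmatrix}W_L&\mathbf b_L\end{bmatrix}$. If the hPNN representation $p_{\widetilde{\mathbf w}}$ with architecture $((d_0+1,\dots,d_{L-1}+1,d_L),\mathbf r)$ is unique (as an hPNN, among all unstructured weight tuples of that architecture), then the PNN representation $p_{\mathbf w,\mathbf b}$ is unique.
   Context: Work over $\mathbb R$. $\rho_r(z_1,\dots,z_d)=(z_1^r,\dots,z_d^r)$. A PNN with architecture $(\mathbf d,\mathbf r)$, $\mathbf d=(d_0,\dots,d_L)$, $\mathbf r=(r_1,\dots,r_{L-1})$, weights $W_\ell\in\mathbb R^{d_\ell\times d_{\ell-1}}$ and biases $\mathbf b_\ell\in\mathbb R^{d_\ell}$ is $p_{\mathbf w,\mathbf b}=f_L\circ\rho_{r_{L-1}}\circ\cdots\circ\rho_{r_1}\circ f_1$, $f_\ell(\mathbf x)=W_\ell\mathbf x+\mathbf b_\ell$; an hPNN $p_{\mathbf w}$ is the case of zero biases. Two parameter sets are equivalent if there exist permutation matrices $P_\ell$ and invertible diagonal matrices $D_\ell$ ($\ell=1,\dots,L-1$), $P_0=D_0=P_L=D_L=I$, with $W'_\ell=P_\ell D_\ell W_\ell D_{\ell-1}^{-r_{\ell-1}}P_{\ell-1}^T$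 ($D_0^{-r_0}:=I$) and $\mathbf b'_\ell=P_\ell D_\ell\mathbf b_\ell$ for all $\ell$ (for hPNNs, only the weight condition). A (h)PNN representation is unique if every parameter set of the same architecture defining the same function is equivalent to it. *)

(* Defs.v *)
From HB Require Import structures.
From mathcomp Require Import all_boot all_order all_algebra.
From mathcomp Require Import reals.
Set Implicit Arguments. Unset Strict Implicit. Unset Printing Implicit Defensive.
Import Order.TTheory GRing.Theory Num.Theory.
Local Open Scope ring_scope.

(* Conventions:
   - layer widths  d : nat -> nat, d 0 .. d L  (paper d_0..d_L);
   - exponents     r : nat -> nat, r l = paper r_l (applied after paper layer l,
     for 1 <= l <= L-1);
   - weights       W l : 'M_(d l.+1, d l) = paper W_{l+1}, for l < L;
   - biases        b l : 'cV_(d l.+1)      = paper b_{l+1}, for l < L.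
   Values of W, b at l >= L are irrelevant. *)

Section PNN.
Variable R : realType.

Definition rho (r : nat) n (v : 'cV[R]_n) : 'cV[R]_n := map_mx (fun z => z ^+ r) v.

Fixpoint pre (d r : nat -> nat) (W : forall l, 'M[R]_(d l.+1, d l))
  (b : forall l, 'cV[R]_(d l.+1)) (x : 'cV[R]_(d 0)) (k : nat) : 'cV[R]_(d k.+1) :=
  match k return 'cV[R]_(d k.+1) with
  | 0 => W 0 *m x + b 0
  | k'.+1 => W k'.+1 *m rho (r k'.+1) (pre r W b x k') + b k'.+1
  end.

(* the PNN p_{w,b} : R^{d_0} -> R^{d_L}, for L >= 1 *)
Definition pnn (d r : nat -> nat) (L : nat) (W : forall l, 'M[R]_(d l.+1, d l))
  (b : forall l, 'cV[R]_(d l.+1)) : 'cV[R]_(d 0) -> 'cV[R]_(d L.-1.+1) :=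
  fun x => pre r W b x L.-1.

Definition hpnn (d r : nat -> nat) (L : nat) (W : forall l, 'M[R]_(d l.+1, d l)) :=
  pnn r L W (fun l => 0).

Definition equiv_data (d : nat -> nat) (L : nat)
  (P : forall l, 'M[R]_(d l)) (D : forall l, 'rV[R]_(d l)) : Prop :=
  [/\ (forall l, (0 < l < L)%N -> is_perm_mx (P l) /\ (forall i, D l 0 i != 0)),
      P 0%N = 1%:M, P L = 1%:M, D 0%N = const_mx 1 & D L = const_mx 1].

(* W'_l = P_l D_l W_l D_{l-1}^{-r_{l-1}} P_{l-1}^T  (paper indexing) *)
Definition weights_rel (d r : nat -> nat) (L : nat)
  (P : forall l, 'M[R]_(d l)) (D : forall l, 'rV[R]_(d l))
  (W W' : forall l, 'M[R]_(d l.+1, d l)) : Prop :=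
  forall l, (l < L)%N ->
    W' l = P l.+1 *m diag_mx (D l.+1) *m W l
             *m diag_mx (map_mx (fun z => z ^- r l) (D l)) *m (P l)^T.

Definition biases_rel (d : nat -> nat) (L : nat)
  (P : forall l, 'M[R]_(d l)) (D : forall l, 'rV[R]_(d l))
  (b b' : forall l, 'cV[R]_(d l.+1)) : Prop :=
  forall l, (l < L)%N -> b' l = P l.+1 *m diag_mx (D l.+1) *m b l.

Definition pnn_equiv (d r : nat -> nat) (L : nat)
  (W : forall l, 'M[R]_(d l.+1, d l)) (b : forall l, 'cV[R]_(d l.+1))
  (W' : forall l, 'M[R]_(d l.+1, d l)) (b' : forall l, 'cV[R]_(d l.+1)) : Prop :=
  exists P D, [/\ equiv_data L P D, weights_rel r L P D W W' & biases_rel L P D b b'].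

Definition hpnn_equiv (d r : nat -> nat) (L : nat)
  (W W' : forall l, 'M[R]_(d l.+1, d l)) : Prop :=
  exists P D, equiv_data L P D /\ weights_rel r L P D W W'.

Definition pnn_unique (d r : nat -> nat) (L : nat)
  (W : forall l, 'M[R]_(d l.+1, d l)) (b : forall l, 'cV[R]_(d l.+1)) : Prop :=
  forall W' b', pnn r L W' b' =1 pnn r L W b -> pnn_equiv r L W b W' b'.

Definition hpnn_unique (d r : nat -> nat) (L : nat)
  (W : forall l, 'M[R]_(d l.+1, d l)) : Prop :=
  forall W', hpnn r L W' =1 hpnn r L W -> hpnn_equiv r L W W'.

(* nat-indexed entry of a matrix (0 outside the range) *)
Definition entry m n (A : 'M[R]_(m, n)) (i j : nat) : R :=
  match @insub _ (fun k => k < m)%N 'I_m i, @insub _ (fun k => k < n)%N 'I_n j with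
  | Some i', Some j' => A i' j'
  | _, _ => 0
  end.

Definition aug_dims (d : nat -> nat) (L : nat) : nat -> nat :=
  fun l => if (l < L)%N then (d l).+1 else d l.

(* augmented weights: [[W_l, b_l]; [0, 1]] for l < L, and [W_L, b_L] for the
   last layer (the last row is absent there since aug_dims L = d L). *)
Definition aug_weights (d : nat -> nat) (L : nat)
  (W : forall l, 'M[R]_(d l.+1, d l)) (b : forall l, 'cV[R]_(d l.+1)) :
  forall l, 'M[R]_(aug_dims d L l.+1, aug_dims d L l) :=
  fun l => \matrix_(i, j)
    if (i < d l.+1)%N then
      (if (j < d l)%N then entry (W l) i j else entry (b l) i 0%N)
    else (if j == d l :> nat then 1 else 0).

End PNN.

(* Main.v *)
Require Import Defs.
From mathcomp Require Import all_boot all_order all_algebra.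
From mathcomp Require Import reals.
From HB Require Import structures.
From mathcomp Require Import fingroup perm.
From Stdlib Require Import FunctionalExtensionality.
Set Implicit Arguments. Unset Strict Implicit. Unset Printing Implicit Defensive.
Import Order.TTheory GRing.Theory Num.Theory.
Local Open Scope ring_scope.

Section Entry.
Variable R : realType.

Lemma entryE m n (A : 'M[R]_(m, n)) (i : 'I_m) (j : 'I_n) : entry A i j = A i j.
Proof. by rewrite /entry !valK. Qed.

Lemma entry_out m n (A : 'M[R]_(m, n)) i j : ~~ ((i < m) && (j < n))%N -> entry A i j = 0.
Proof.
rewrite /entry negb_and => /orP [H|H].
  by rewrite insubN.
by case: insub => // ?; rewrite insubN.
Qed.

Lemma entry_ext m n (A B : 'M[R]_(m, n)) :
  (forall i j, entry A i j = entry B i j) -> A = B.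
Proof. by move=> H; apply/matrixP => i j; rewrite -!entryE. Qed.

Lemma entry_mul m n p (A : 'M[R]_(m, n)) (B : 'M[R]_(n, p)) i k :
  entry (A *m B) i k = \sum_(0 <= j < n) entry A i j * entry B j k.
Proof.
have [/andP [Hi Hk]|H] := boolP ((i < m) && (k < p))%N.
  rewrite -[i]/(val (Ordinal Hi)) -[k]/(val (Ordinal Hk)) entryE mxE big_mkord.
  by apply: eq_bigr => j _; rewrite !entryE.
rewrite entry_out // big1_seq // => j _.
move: H; rewrite negb_and => /orP [H|H].
  by rewrite (@entry_out _ _ A) ?mul0r // negb_and H.
by rewrite (@entry_out _ _ B) ?mulr0 // negb_and H orbT.
Qed.

Lemma entry_add m n (A B : 'M[R]_(m, n)) i j : entry (A + B) i j = entry A i j + entry B i j.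
Proof.
have [/andP [Hi Hk]|H] := boolP ((i < m) && (j < n))%N.
  rewrite -[i]/(val (Ordinal Hi)) -[j]/(val (Ordinal Hk)) !entryE mxE //.
by rewrite !entry_out // addr0.
Qed.

Lemma entry_scale m n (A : 'M[R]_(m, n)) a i j : entry (a *: A) i j = a * entry A i j.
Proof.
have [/andP [Hi Hk]|H] := boolP ((i < m) && (j < n))%N.
  rewrite -[i]/(val (Ordinal Hi)) -[j]/(val (Ordinal Hk)) !entryE mxE //.
by rewrite !entry_out // mulr0.
Qed.

Lemma entry_map m n (A : 'M[R]_(m, n)) (f : R -> R) i j :
  entry (map_mx f A) i j = if ((i < m) && (j < n))%N then f (entry A i j) else 0.
Proof.
have [/andP [Hi Hk]|H] := boolP ((i < m) && (j < n))%N.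
  rewrite -[i]/(val (Ordinal Hi)) -[j]/(val (Ordinal Hk)) !entryE mxE //.
by rewrite !entry_out // (negbTE H).
Qed.

Lemma entry_mx m n (F : 'I_m -> 'I_n -> R) (G : nat -> nat -> R) i j :
  (forall (i : 'I_m) (j : 'I_n), F i j = G i j) ->
  entry (\matrix_(i, j) F i j) i j = if ((i < m) && (j < n))%N then G i j else 0.
Proof.
move=> FG.
have [/andP [Hi Hk]|H] := boolP ((i < m) && (j < n))%N.
  rewrite -[i]/(val (Ordinal Hi)) -[j]/(val (Ordinal Hk)) !entryE mxE //.
by rewrite !entry_out.
Qed.

Lemma sum_last n m (F : nat -> R) : n = m.+1 ->
  \sum_(0 <= k < n) F k = \sum_(0 <= k < m) F k + F m.
Proof. by move=> ->; rewrite big_nat_recr. Qed.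

End Entry.

Fixpoint expo (r : nat -> nat) (k : nat) : nat :=
  match k with 0 => 1%N | k'.+1 => (expo r k' * r k'.+1)%N end.

Fixpoint preG (T : comNzRingType) (d r : nat -> nat) (W : forall l, 'M[T]_(d l.+1, d l))
  (x : 'cV[T]_(d 0)) (k : nat) : 'cV[T]_(d k.+1) :=
  match k return 'cV[T]_(d k.+1) with
  | 0 => W 0 *m x
  | k'.+1 => W k'.+1 *m map_mx (fun z => z ^+ r k'.+1) (preG r W x k')
  end.

Lemma preG_map (T S : comNzRingType) (f : {rmorphism T -> S}) d r
  (W : forall l, 'M[T]_(d l.+1, d l)) x k :
  map_mx f (preG r W x k) = preG r (fun l => map_mx f (W l)) (map_mx f x) k.
Proof.
elim: k => [|k IH] /=; first by rewrite map_mxM.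
rewrite map_mxM -IH; congr (_ *m _).
by apply/matrixP => i j; rewrite !mxE rmorphXn.
Qed.

Section Hom.
Variable R : realType.

Lemma pre_preG d r (W : forall l, 'M[R]_(d l.+1, d l)) x k :
  pre r W (fun l => 0) x k = preG r W x k.
Proof. by elim: k => [|k IH] /=; rewrite addr0 // IH. Qed.

Lemma pre_scale d r (W : forall l, 'M[R]_(d l.+1, d l)) (v : 'cV[R]_(d 0)) t k :
  pre r W (fun l => 0) (t *: v) k = t ^+ (expo r k) *: pre r W (fun l => 0) v k.
Proof.
elim: k => [|k IH] /=; first by rewrite !addr0 expr1 scalemxAr.
rewrite !addr0 IH scalemxAr /rho; congr (_ *m _).
by apply/matrixP => i j; rewrite !mxE exprMn exprM.
Qed.

Lemma poly_zero (q : {poly R}) t0 : (forall t, t != t0 -> q.[t] = 0) -> q = 0.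
Proof.
move=> H; apply/eqP; apply/negPn/negP => qn0.
pose rs := [seq t0 + (i.+1)%:R | i <- iota 0 (size q)].
suff: (size rs < size q)%N by rewrite size_map size_iota ltnn.
apply: max_poly_roots qn0 _ _.
  apply/allP => x /mapP [i _ ->]; apply/rootP; apply: H.
  by rewrite -subr_eq0 addrAC subrr add0r pnatr_eq0.
rewrite map_inj_uniq ?iota_uniq // => i j /addrI /eqP.
by rewrite eqr_nat => /eqP [].
Qed.

Lemma hpnn_poly d r L (W : forall l, 'M[R]_(d l.+1, d l)) (u w : 'cV[R]_(d 0)) :
  exists Q : 'cV[{poly R}]_(d L.-1.+1), forall t,
    hpnn r L W (u + t *: w) = map_mx (horner_eval t) Q.
Proof.
exists (preG r (fun l => map_mx polyC (W l)) (map_mx polyC u + 'X *: map_mx polyC w) L.-1).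
move=> t; rewrite /hpnn /pnn pre_preG preG_map.
have -> : (fun l => map_mx (horner_eval t) (map_mx polyC (W l))) = W.
  apply: functional_extensionality_dep => l.
  by apply/matrixP => i j; rewrite !mxE /= horner_evalE hornerC.
congr (preG r W _ L.-1); apply/matrixP => i j; rewrite !mxE /= horner_evalE hornerD hornerM hornerX !hornerC.
by [].
Qed.

Lemma hpnn_ext d r L (W1 W2 : forall l, 'M[R]_(d l.+1, d l)) c : (c < d 0)%N ->
  (forall v, entry v c 0 != 0 -> hpnn r L W1 v = hpnn r L W2 v) ->
  hpnn r L W1 =1 hpnn r L W2.
Proof.
move=> hc H v.
pose w : 'cV[R]_(d 0) := \col_i (i == c :> nat)%:R.
have [Q1 HQ1] := hpnn_poly r L W1 v w.
have [Q2 HQ2] := hpnn_poly r L W2 v w.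
have E : forall t, v + t *: w = v + t *: w by [].
have Hz : forall t, t != - entry v c 0 -> map_mx (horner_eval t) Q1 = map_mx (horner_eval t) Q2.
  move=> t Ht; rewrite -HQ1 -HQ2; apply: H.
  rewrite entry_add entry_scale.
  rewrite -[c]/(val (Ordinal hc)) -[0%N]/(val (@ord0 0)) !entryE mxE eqxx mulr1 /=.
  by rewrite -(entryE v (Ordinal hc) ord0) addrC addr_eq0.
have Hq : Q1 = Q2.
  apply/matrixP => i j; apply/eqP; rewrite -subr_eq0; apply/eqP.
  apply: (poly_zero (t0 := - entry v c 0)) => t Ht.
  by have := Hz t Ht; move/matrixP/(_ i j); rewrite !mxE /= !horner_evalE => E2; rewrite hornerD hornerN E2 subrr.

have E0 : v = v + 0 *: w by rewrite scale0r addr0.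

by rewrite E0 HQ1 HQ2 Hq.
Qed.

End Hom.

Section Aug.
Variable R : realType.

Lemma entry0 m n i j : entry (0 : 'M[R]_(m, n)) i j = 0.
Proof.
have [/andP [Hi Hk]|H] := boolP ((i < m) && (j < n))%N.
  by rewrite -[i]/(val (Ordinal Hi)) -[j]/(val (Ordinal Hk)) !entryE mxE.
by rewrite entry_out.
Qed.

Definition augG (d : nat -> nat) (W : forall l, 'M[R]_(d l.+1, d l))
  (b : forall l, 'cV[R]_(d l.+1)) l (i j : nat) : R :=
  if (i < d l.+1)%N then (if (j < d l)%N then entry (W l) i j else entry (b l) i 0%N)
  else (if j == d l then 1 else 0).

Lemma aug_dimsE d L l : aug_dims d L l = if (l < L)%N then (d l).+1 else d l.
Proof. by []. Qed.

Lemma entry_aug d L (W : forall l, 'M[R]_(d l.+1, d l)) b l i j :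
  entry (aug_weights L W b l) i j =
  if ((i < aug_dims d L l.+1) && (j < aug_dims d L l))%N then augG W b l i j else 0.
Proof. by rewrite /aug_weights (entry_mx (G := augG W b l)). Qed.

Lemma entry_rho r n (v : 'cV[R]_n) i :
  entry (rho r v) i 0 = if (i < n)%N then (entry v i 0) ^+ r else 0.
Proof. by rewrite /rho entry_map andbT. Qed.

Lemma layer_aug d L (W : forall l, 'M[R]_(d l.+1, d l)) b l (hl : (l < L)%N)
  (y : 'cV[R]_(aug_dims d L l)) (z : 'cV[R]_(d l)) :
  (forall j, (j < d l)%N -> entry y j 0 = entry z j 0) -> entry y (d l) 0 = 1 ->
  forall i, entry (aug_weights L W b l *m y) i 0 =
    if (i < d l.+1)%N then entry (W l *m z + b l) i 0
    else if (i == d l.+1) && (l.+1 < L)%N then 1 else 0.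
Proof.
move=> Hyz Hy1 i.
have Hn : aug_dims d L l = (d l).+1 by rewrite aug_dimsE hl.
rewrite entry_mul (sum_last _ Hn) entry_add entry_mul.
have hlt : forall j, (j <= d l)%N -> (j < aug_dims d L l)%N by move=> j; rewrite Hn ltnS.
rewrite entry_aug hlt // andbT Hy1 mulr1.
have Hi : (i < aug_dims d L l.+1)%N = (i < d l.+1)%N || ((i == d l.+1) && (l.+1 < L)%N).
  rewrite aug_dimsE; case: ifP => hL; last by rewrite andbF orbF.
  by rewrite andbT ltnS leq_eqVlt orbC.
have [hi|hi] := boolP (i < d l.+1)%N.
  rewrite Hi hi /= /augG hi ltnn; congr (_ + _).
  apply: eq_big_nat => j /andP [_ hj].
  by rewrite entry_aug Hi hi /= hlt ?(ltnW hj) // /augG hi hj Hyz.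
rewrite Hi (negbTE hi) /=.
case: ifP => hc; last first.
  rewrite big1_seq ?add0r // => j _; by rewrite entry_aug Hi (negbTE hi) hc mul0r.
rewrite /augG (negbTE hi) eqxx big1_seq ?add0r // => j /andP [_].
rewrite mem_index_iota => /andP [_ hj].
rewrite entry_aug Hi (negbTE hi) hc /augG (negbTE hi).
by rewrite (ltn_eqF hj) if_same mul0r.
Qed.

Lemma pre_aug d r L (W : forall l, 'M[R]_(d l.+1, d l)) b
  (v1 : 'cV[R]_(aug_dims d L 0)) (x1 : 'cV[R]_(d 0)) :
  (forall j, (j < d 0)%N -> entry v1 j 0 = entry x1 j 0) -> entry v1 (d 0) 0 = 1 ->
  forall k, (k < L)%N -> forall i,
  entry (pre r (aug_weights L W b) (fun l => 0) v1 k) i 0 =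
    if (i < d k.+1)%N then entry (pre r W b x1 k) i 0
    else if (i == d k.+1) && (k.+1 < L)%N then 1 else 0.
Proof.
move=> H1 H2; elim => [|k IH] hk i /=.
  by rewrite entry_add entry0 addr0 (layer_aug _ _ hk H1 H2).
rewrite entry_add entry0 addr0 (layer_aug _ _ hk (z := rho (r k.+1) (pre r W b x1 k))) //.
  move=> j hj; rewrite !entry_rho IH ?(ltnW hk) // hj.
  by rewrite aug_dimsE hk (ltn_trans hj (ltnSn _)).
rewrite entry_rho IH ?(ltnW hk) // ltnn eqxx hk expr1n.
by rewrite aug_dimsE hk ltnSn.
Qed.

Lemma hpnn_aug_pnn d r L (hL : (0 < L)%N) (W : forall l, 'M[R]_(d l.+1, d l)) b
  (v1 : 'cV[R]_(aug_dims d L 0)) (x1 : 'cV[R]_(d 0)) :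
  (forall j, (j < d 0)%N -> entry v1 j 0 = entry x1 j 0) -> entry v1 (d 0) 0 = 1 ->
  forall i j, entry (hpnn r L (aug_weights L W b) v1) i j = entry (pnn r L W b x1) i j.
Proof.
move=> H1 H2 i j.
case: j => [|j]; last by rewrite !entry_out // !negb_and orbC.
rewrite /hpnn /pnn (pre_aug _ _ _ H1 H2) ?prednK ?leqnn //.
rewrite (_ : (L.-1.+1 < L)%N = false) ?prednK ?ltnn // andbF; case: ifP => // hi; by rewrite entry_out // negb_and hi.
Qed.

Lemma entry_col m (F : 'I_m -> R) (G : nat -> R) i j :
  (forall i : 'I_m, F i = G i) ->
  entry (\col_i F i) i j = if ((i < m) && (j < 1))%N then G i else 0.
Proof. by move=> H; rewrite (entry_mx (G := fun i j => G i)). Qed.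

Lemma step1 d r L (hL : (0 < L)%N) (W W' : forall l, 'M[R]_(d l.+1, d l)) b b' :
  pnn r L W' b' =1 pnn r L W b ->
  hpnn r L (aug_weights L W' b') =1 hpnn r L (aug_weights L W b).
Proof.
move=> Hp.
have hc : (d 0 < aug_dims d L 0)%N by rewrite aug_dimsE hL.
apply: (hpnn_ext hc) => v hv.
set t := entry v (d 0) 0 in hv.
pose x1 : 'cV[R]_(d 0) := \col_(i < d 0) (entry v i 0 / t).
pose v1 : 'cV[R]_(aug_dims d L 0) :=
  \col_(i < aug_dims d L 0) (if (i < d 0)%N then entry v i 0 / t else 1).
have E1 : forall j, (j < d 0)%N -> entry v1 j 0 = entry x1 j 0.
  move=> j hj; rewrite /v1 /x1 (entry_col (G := fun i => if (i < d 0)%N then entry v i 0 / t else 1)) //.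
  rewrite (entry_col (G := fun i => entry v i 0 / t)) //. by rewrite hj (ltn_trans hj hc).
have E2 : entry v1 (d 0) 0 = 1.
  by rewrite /v1 (entry_col (G := fun i => if (i < d 0)%N then entry v i 0 / t else 1)) ?hc ?ltnn.
have Ev : v = t *: v1.
  apply: entry_ext => i j; rewrite entry_scale /v1.
  rewrite (entry_col (G := fun i => if (i < d 0)%N then entry v i 0 / t else 1)) //.
  case: j => [|j] /=; last by rewrite andbF mulr0 entry_out // andbF.
  rewrite andbT; case: ifP => hi; last by rewrite entry_out ?mulr0 // hi.
  case: ifP => hi'; first by rewrite mulrC divfK.
  have -> : i = d 0 by move: hi; rewrite aug_dimsE hL ltnS leq_eqVlt hi' orbF => /eqP.
  by rewrite mulr1.
rewrite Ev /hpnn /pnn !pre_scale; congr (_ *: _).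
apply: entry_ext => i j.
have := hpnn_aug_pnn r hL W' b' E1 E2 i j; rewrite /hpnn /pnn => ->.
have := hpnn_aug_pnn r hL W b E1 E2 i j; rewrite /hpnn /pnn => ->.
by have := Hp x1; rewrite /pnn => ->.
Qed.

End Aug.

Section Nnz.
Variable R : realType.

Definition nnz m n (A : 'M[R]_(m, n)) : nat := (\sum_(i < m) \sum_(j < n) (A i j != 0%R : nat))%N.

Lemma equiv_perm_mxE m n (A : 'M[R]_(m, n)) s s' (u : 'rV_m) (v : 'rV_n) i j :
  (perm_mx s *m diag_mx u *m A *m diag_mx v *m (perm_mx s')^T) i j =
  u 0 (s i) * A (s i) (s' j) * v 0 (s' j).
Proof.
rewrite tr_perm_mx -col_permE mxE -!mulmxA -row_permE mxE mul_diag_mx mxE mul_mx_diag mxE.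
by rewrite mulrA. Qed.

Lemma nnz_eq m n (A : 'M[R]_(m, n)) (P : 'M_m) (Q : 'M_n) (u : 'rV_m) (v : 'rV_n) :
  is_perm_mx P -> is_perm_mx Q -> (forall i, u 0 i != 0) -> (forall j, v 0 j != 0) ->
  nnz (P *m diag_mx u *m A *m diag_mx v *m Q^T) = nnz A.
Proof.
move=> /is_perm_mxP [s ->] /is_perm_mxP [s' ->] hu hv.
rewrite /nnz (reindex_inj (h := s^-1%g)) /=; last exact: perm_inj.
apply: eq_bigr => i _.
rewrite (reindex_inj (h := s'^-1%g)) /=; last exact: perm_inj.
apply: eq_bigr => j _.
by rewrite equiv_perm_mxE !permKV !mulf_eq0 negb_or negb_or (negbTE (hu _)) (negbTE (hv _)) /= andbT.
Qed.

Lemma ltn_sum_pt (I : finType) (F G : I -> nat) (x : I) :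
  (forall i, F i <= G i)%N -> (F x < G x)%N -> (\sum_i F i < \sum_i G i)%N.
Proof.
move=> H Hx; rewrite (bigD1 x) //= (bigD1 x (F := G)) //=.
have := @leq_sum I (index_enum I) (fun i => i != x) F G (fun i _ => H i).
move: (\sum_(i | _) F i) (\sum_(i | _) G i) => a b hab.
by rewrite -addSn leq_add.
Qed.

Lemma equiv_data_le d L (P : forall l, 'M[R]_(d l)) D l :
  equiv_data L P D -> (l <= L)%N -> is_perm_mx (P l) /\ (forall i, D l 0 i != 0).
Proof.
case=> H0 P0 PL D0 DL hl.
case: l hl => [|l] hl.
  by rewrite P0 D0 is_perm_mx1; split => // i; rewrite mxE oner_neq0.
move: hl; rewrite leq_eqVlt => /orP [/eqP E|hl].
  by rewrite E PL DL is_perm_mx1; split => // i; rewrite mxE oner_neq0.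
exact: H0.
Qed.

End Nnz.

Section Nodup.
Variable R : realType.
Variables (d r : nat -> nat) (L : nat) (W : forall l, 'M[R]_(d l.+1, d l)).
Variables (k a c : nat) (beta : R).
Hypotheses (hac : a != c) (ha : (a < d k.+1)%N) (hc : (c < d k.+1)%N).

Definition Gmod l i j : R :=
  if l == k then (if i == a then 0 else entry (W l) i j)
  else if l == k.+1 then
    (if j == a then 0 else if j == c then entry (W l) i c + beta ^+ r k.+1 * entry (W l) i a
     else entry (W l) i j)
  else entry (W l) i j.

Definition Wmod : forall l, 'M[R]_(d l.+1, d l) := fun l => \matrix_(i, j) Gmod l i j.

Lemma entry_Wmod l i j : entry (Wmod l) i j = Gmod l i j.
Proof.
rewrite /Wmod (entry_mx (G := Gmod l)) //.
case: ifP => // hout; rewrite /Gmod.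
case: eqP => [El|_]; first by case: eqP => // _; rewrite entry_out ?hout.
case: eqP => [El|_]; last by rewrite entry_out ?hout.
subst l; case: eqP => // _; case: eqP => [Ej|_]; last by rewrite entry_out ?hout.
subst j; move: hout; rewrite hc andbT => hout.
by rewrite !entry_out ?mulr0 ?addr0 // negb_and hout.
Qed.

Lemma Wmod_other l : l != k -> l != k.+1 -> Wmod l = W l.
Proof.
move=> h1 h2; apply: entry_ext => i j.
by rewrite entry_Wmod /Gmod (negbTE h1) (negbTE h2).
Qed.

Definition inp (W0 : forall l, 'M[R]_(d l.+1, d l)) (v : 'cV[R]_(d 0)) m : 'cV[R]_(d m) :=
  match m with 0 => v | m'.+1 => rho (r m'.+1) (pre r W0 (fun l => 0) v m') end.

Lemma preE (W0 : forall l, 'M[R]_(d l.+1, d l)) v m :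
  pre r W0 (fun l => 0) v m = W0 m *m inp W0 v m.
Proof. by case: m => [|m] /=; rewrite addr0. Qed.

Lemma sum_delta n (X : R) x : (x < n)%N ->
  \sum_(0 <= j < n) (if j == x then X else 0) = X.
Proof.
elim: n => [//|n IH] hx; rewrite big_nat_recr //=.
have [E|ne] := eqVneq n x.
  subst x; rewrite big1_seq ?add0r // => j /andP [_].
  by rewrite mem_index_iota => /andP [_ hj]; rewrite (ltn_eqF hj).
rewrite IH ?addr0 //.
by move: hx; rewrite ltnS leq_eqVlt eq_sym (negbTE ne).
Qed.

Hypothesis Hrow : forall j, entry (W k) a j = beta * entry (W k) c j.

Section Fixv.
Variable v : 'cV[R]_(d 0).

Lemma inp_low m : (m <= k)%N -> inp Wmod v m = inp W v m.
Proof.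
elim: m => [//|m IH] hm /=.
rewrite !preE IH ?(ltnW hm) // Wmod_other //.
  by rewrite ltn_eqF.
by rewrite ltn_eqF // (ltn_trans hm).
Qed.

Lemma pre_k i : entry (pre r Wmod (fun l => 0) v k) i 0 =
  if i == a then 0 else entry (pre r W (fun l => 0) v k) i 0.
Proof.
rewrite !preE inp_low // !entry_mul.
case: eqP => [Ei|ne].
  by rewrite big1_seq // => j _; rewrite entry_Wmod /Gmod eqxx Ei eqxx mul0r.
by apply: eq_bigr => j _; rewrite entry_Wmod /Gmod eqxx; case: eqP => // /ne.
Qed.

Lemma pre_k_a : entry (pre r W (fun l => 0) v k) a 0 =
  beta * entry (pre r W (fun l => 0) v k) c 0.
Proof.
rewrite !preE !entry_mul mulr_sumr; apply: eq_bigr => j _.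
by rewrite Hrow mulrA.
Qed.

Lemma pre_k1 : pre r Wmod (fun l => 0) v k.+1 = pre r W (fun l => 0) v k.+1.
Proof.
apply: entry_ext => i j.
case: j => [|j]; last by rewrite !entry_out // !negb_and orbC.
rewrite !preE /= !entry_mul.
set y := fun j => entry (rho (r k.+1) (pre r W (fun l => 0) v k)) j 0.
set X := entry (W k.+1) i a * y a.
have Ey : forall j, entry (rho (r k.+1) (pre r Wmod (fun l => 0) v k)) j 0 =
    if j == a then entry (rho (r k.+1) (pre r Wmod (fun l => 0) v k)) j 0 else y j.
  move=> j; case: eqP => // /eqP ja.
  by rewrite /y !entry_rho pre_k (negbTE ja).
have Eya : y a = beta ^+ r k.+1 * y c.
  by rewrite /y !entry_rho ha hc pre_k_a exprMn.
transitivity (\sum_(0 <= j < d k.+1)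
   (entry (W k.+1) i j * y j - (if j == a then X else 0) + (if j == c then X else 0))).
  apply: eq_big_seq => j _; rewrite entry_Wmod /Gmod (gtn_eqF (ltnSn k)) eqxx Ey.
  case: eqP => [Ej|ne].
    by subst j; rewrite (negbTE hac) addr0 mul0r /X subrr.
  case: eqP => [Ej|_]; last by rewrite subr0 addr0.
  by subst j; rewrite subr0 /X Eya mulrDl; congr (_ + _); rewrite mulrCA mulrA.
rewrite big_split big_split /= sumrN !sum_delta //.
by rewrite subrK.
Qed.

Lemma pre_high m : (k.+1 <= m)%N -> pre r Wmod (fun l => 0) v m = pre r W (fun l => 0) v m.
Proof.
elim: m => [//|m IH] hm.
have [Em|ne] := eqVneq m k; first by subst m; exact: pre_k1.
have hkm : (k < m)%N by rewrite ltn_neqAle eq_sym ne -ltnS.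
rewrite /= IH // Wmod_other //.
by rewrite gtn_eqF // ltnW.
Qed.

End Fixv.

Lemma nodup : hpnn_unique r L W -> (k.+1 < L)%N ->
  (exists j, entry (W k) a j != 0) -> False.
Proof.
move=> Hu hk [j0 hj0].
have Hf : hpnn r L Wmod =1 hpnn r L W.
  move=> v; rewrite /hpnn /pnn pre_high //.
  by rewrite -ltnS prednK // (ltn_trans _ hk).
have [P [D [Heq Hw]]] := Hu Wmod Hf.
have hkL : (k < L)%N by rewrite (ltn_trans _ hk).
have [P1 D1] := equiv_data_le Heq (ltnW hk).
have [P0 D0] := equiv_data_le Heq (ltnW hkL).
have E := Hw k hkL.
have Hn : nnz (Wmod k) = nnz (W k).
  rewrite E nnz_eq // => i; rewrite mxE invr_eq0 expf_eq0 negb_and.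
  by rewrite D0 orbT.
have hj : (j0 < d k)%N.
  by apply: contraNT hj0 => hj; rewrite entry_out // negb_and hj orbT.
suff : (nnz (Wmod k) < nnz (W k))%N by rewrite Hn ltnn.
apply: (ltn_sum_pt (x := Ordinal ha)).
  move=> i; apply: leq_sum => j _.
  rewrite -!entryE entry_Wmod /Gmod eqxx; case: ifP => _; [by rewrite eqxx | by []].
apply: (ltn_sum_pt (x := Ordinal hj)).
  move=> j; rewrite -!entryE entry_Wmod /Gmod !eqxx /=.
  by [].
by rewrite -!entryE entry_Wmod /Gmod !eqxx /= hj0.
Qed.

End Nodup.

Section Main.
Variable R : realType.
Variables (d r : nat -> nat) (L : nat).
Hypothesis hL : (0 < L)%N.
Variables (W W' : forall l, 'M[R]_(d l.+1, d l)) (b b' : forall l, 'cV[R]_(d l.+1)).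
Variables (P : forall l, 'M[R]_(aug_dims d L l)) (D : forall l, 'rV[R]_(aug_dims d L l)).
Hypothesis Hu : hpnn_unique r L (aug_weights L W b).
Hypothesis Heq : equiv_data L P D.
Hypothesis Hw : weights_rel r L P D (aug_weights L W b) (aug_weights L W' b').

Local Notation n l := (aug_dims d L l).
Local Notation Wt := (aug_weights L W b).
Local Notation Wt' := (aug_weights L W' b').

Definition sig l : {perm 'I_(n l)} := odflt 1%g [pick s : {perm 'I_(n l)} | P l == perm_mx s].

Lemma Psig l : (l <= L)%N -> P l = perm_mx (sig l).
Proof.
move=> hl; have [Hp _] := equiv_data_le Heq hl.
case/is_perm_mxP: Hp => s Hs; rewrite /sig; case: pickP => [s' /eqP //|H].
by have := H s; rewrite Hs eqxx.
Qed.

Definition sf l (i : nat) : nat :=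
  match @insub _ (fun k => (k < n l)%N) 'I_(n l) i with
  | Some o => val (sig l o) | None => i end.

Lemma sfE l (o : 'I_(n l)) : sf l o = sig l o.
Proof. by rewrite /sf valK. Qed.

Lemma sf_lt l i : (i < n l)%N -> (sf l i < n l)%N.
Proof. by move=> h; rewrite -[i]/(val (Ordinal h)) sfE ltn_ord. Qed.

Lemma sf_inj l i j : (i < n l)%N -> (j < n l)%N -> sf l i = sf l j -> i = j.
Proof.
move=> hi hj; rewrite -[i]/(val (Ordinal hi)) -[j]/(val (Ordinal hj)) !sfE.
by move/val_inj/perm_inj => ->.
Qed.

Lemma sf_surj l j' : (j' < n l)%N -> exists2 j, (j < n l)%N & sf l j = j'.
Proof.
move=> h; exists (val ((sig l)^-1%g (Ordinal h))); first exact: ltn_ord.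
by rewrite sfE permKV.
Qed.

Lemma sf_id l : P l = 1%:M -> (l <= L)%N -> forall i, sf l i = i.
Proof.
move=> H1 hl i; rewrite /sf; case: insubP => // o _ <-.
have := Psig hl; rewrite H1 => /matrixP /(_ o (sig l o)).
rewrite /perm_mx !mxE eqxx; case: (o =P sig l o) => [<- //|_] /= /eqP.
by rewrite eq_sym oner_eq0.
Qed.

Definition Dn l i := entry (D l) 0 i.

Lemma Dn_nz l i : (l <= L)%N -> (i < n l)%N -> Dn l i != 0.
Proof.
move=> hl hi; have [_ HD] := equiv_data_le Heq hl.
by rewrite /Dn -[i]/(val (Ordinal hi)) -[0%N]/(val (@ord0 0)) entryE HD.
Qed.

Lemma Dn_one l i : D l = const_mx 1 -> (i < n l)%N -> Dn l i = 1.
Proof.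
move=> H hi.
by rewrite /Dn -[i]/(val (Ordinal hi)) -[0%N]/(val (@ord0 0)) entryE H mxE.
Qed.

Lemma key l i j : (l < L)%N -> (i < n l.+1)%N -> (j < n l)%N ->
  entry (Wt' l) i j =
  Dn l.+1 (sf l.+1 i) * entry (Wt l) (sf l.+1 i) (sf l j) * (Dn l (sf l j)) ^- r l.
Proof.
move=> hl hi hj.
rewrite -[i]/(val (Ordinal hi)) -[j]/(val (Ordinal hj)) Hw //.
rewrite (Psig (l := l.+1)) // (Psig (l := l)) ?(ltnW hl) //.
rewrite !sfE /Dn -[0%N]/(val (@ord0 0)) !entryE equiv_perm_mxE; congr (_ * _).
by rewrite mxE.
Qed.

Lemma aug_n l i : (i < d l)%N -> (i < n l)%N.
Proof. by rewrite aug_dimsE; case: ifP => // _ h; rewrite ltnW. Qed.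

Lemma entry_augW l i j : (i < d l.+1)%N -> (j < d l)%N ->
  entry (aug_weights L W b l) i j = entry (W l) i j.
Proof.
by move=> hi hj; rewrite entry_aug !aug_n // /augG hi hj.
Qed.

Lemma entry_augW' l i j : (i < d l.+1)%N -> (j < d l)%N ->
  entry (aug_weights L W' b' l) i j = entry (W' l) i j.
Proof.
by move=> hi hj; rewrite entry_aug !aug_n // /augG hi hj.
Qed.

Lemma const_ok l : (l < L)%N -> sf l (d l) = d l /\ Dn l (d l) = 1.
Proof.
have hn : forall l, (l < L)%N -> n l = (d l).+1 by move=> l' h; rewrite aug_dimsE h.
elim: l => [|l IH] hl.
  have [_ P0 _ D0 _] := Heq.
  by rewrite sf_id // Dn_one // hn.
have hl' : (l < L)%N by rewrite ltnW.
have [IHs IHd] := IH hl'.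
set c0 := d l.+1.
have hc0 : (c0 < n l.+1)%N by rewrite hn.
have hdl : (d l < n l)%N by rewrite hn.
set a := sf l.+1 c0.
have ha : (a < n l.+1)%N by exact: sf_lt.
have Erow' : forall j, (j < n l)%N -> entry (Wt' l) c0 j = if j == d l then 1 else 0.
  by move=> j hj; rewrite entry_aug hc0 hj /augG ltnn.
have Erow : forall j, entry (Wt l) c0 j = if j == d l then 1 else 0.
  move=> j; rewrite entry_aug hc0 /augG ltnn /=.
  case: ifP => // hj; case: eqP => // Ej; by rewrite Ej hdl in hj.
have E1 := key hl' hc0 hdl.
rewrite Erow' // eqxx IHs IHd expr1n invr1 mulr1 -/a in E1.
have Dna : Dn l.+1 a != 0 by apply: Dn_nz (ltnW hl) ha.
set beta := entry (Wt l) a (d l) in E1.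
have hbeta : beta != 0.
  by apply/eqP => E0; rewrite E0 mulr0 in E1; move/eqP: E1; rewrite oner_eq0.
have Ezero : forall j', (j' < n l)%N -> j' != d l -> entry (Wt l) a j' = 0.
  move=> j' hj' ne; have [j hj Ej] := sf_surj hj'.
  have := key hl' hc0 hj; rewrite Erow' // -/a Ej.
  have -> : (j == d l) = false.
    by apply/negbTE; apply: contra ne => /eqP E; rewrite -Ej E IHs.
  move/esym/eqP; rewrite !mulf_eq0 (negbTE Dna) /= invr_eq0 expf_eq0.
  by rewrite (negbTE (Dn_nz (ltnW hl') hj')) andbF orbF => /eqP.
have Ha : a = c0.
  apply/eqP; apply/negPn/negP => hac.
  apply: (@nodup R (aug_dims d L) r L Wt l a c0 beta hac ha hc0 _ Hu hl).
    move=> j; rewrite Erow; case: eqP => [->|ne]; first by rewrite mulr1.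
    rewrite mulr0; have [hj|hj] := ltnP j (n l); first by apply: Ezero => //; apply/eqP.
    by rewrite entry_out // negb_and (ltnNge j) hj orbT.
  by exists (d l).
split => //.
by rewrite -/c0 -Ha E1 /beta Ha Erow eqxx mulr1.
Qed.

Lemma sf_small l i : (l <= L)%N -> (i < d l)%N -> (sf l i < d l)%N.
Proof.
move=> hl hi.
move: hl; rewrite leq_eqVlt => /orP [/eqP El|hl].
  have [_ _ PL _ _] := Heq.
  by subst l; rewrite sf_id.
have hn : n l = (d l).+1 by rewrite aug_dimsE hl.
have h1 : (sf l i < (d l).+1)%N by rewrite -hn; apply: sf_lt; apply: aug_n.
move: h1; rewrite ltnS leq_eqVlt => /orP [/eqP E|//].
have [Hs _] := const_ok hl.
have := @sf_inj l i (d l) (aug_n hi); rewrite hn ltnSn E Hs => /(_ isT erefl) Ei.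
by rewrite Ei ltnn in hi.
Qed.


Lemma sp_ex l : (l <= L)%N -> exists s : {perm 'I_(d l)}, forall i : 'I_(d l), val (s i) = sf l i.
Proof.
move=> hl.
pose f := fun i : 'I_(d l) => Ordinal (sf_small hl (ltn_ord i)).
have finj : injective f.
  move=> i j /(congr1 val) /= /sf_inj E; apply: val_inj; apply: E; exact: aug_n.
by exists (perm finj) => i; rewrite permE.
Qed.

Definition sp l : {perm 'I_(d l)} :=
  odflt 1%g [pick s : {perm 'I_(d l)} | [forall i, val (s i) == sf l i]].

Lemma spE l (i : 'I_(d l)) : (l <= L)%N -> val (sp l i) = sf l i.
Proof.
move=> hl; have [s Hs] := sp_ex hl; rewrite /sp; case: pickP => [s' /forallP H|H].
  exact/eqP/H.
have := H s; move/negbT/negP; case; apply/forallP => j; by rewrite Hs.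
Qed.

Lemma sp_one l : P l = 1%:M -> (l <= L)%N -> sp l = 1%g.
Proof.
move=> H1 hl; apply/permP => i; apply: val_inj.
by rewrite spE // perm1 sf_id.
Qed.

Lemma bias_mxE m (s : {perm 'I_m}) (u : 'rV[R]_m) (v : 'cV[R]_m) i j :
  (perm_mx s *m diag_mx u *m v) i j = u 0 (s i) * v (s i) j.
Proof. by rewrite -mulmxA -row_permE mxE mul_diag_mx mxE. Qed.

Lemma final : pnn_equiv r L W b W' b'.
Proof.
exists (fun l => perm_mx (sp l)), (fun l => \row_(i < d l) Dn l i).
have [_ P0 PL D0 DL] := Heq.
split.
- split.
  + move=> l /andP [h0 hl]; split; first exact: perm_mx_is_perm.
    by move=> i; rewrite mxE; apply: Dn_nz (ltnW hl) (aug_n (ltn_ord i)).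
  + by rewrite sp_one // perm_mx1.
  + by rewrite sp_one // perm_mx1.
  + by apply/matrixP => i j; rewrite !mxE Dn_one // aug_n.
  + by apply/matrixP => i j; rewrite !mxE Dn_one // aug_n.
- move=> l hl; apply/matrixP => i j; rewrite equiv_perm_mxE !mxE.
  rewrite -entryE -(entry_augW' (ltn_ord i) (ltn_ord j)) key ?aug_n //.
  rewrite -[W l _ _]entryE !spE // ?(ltnW hl) //.
  by rewrite entry_augW // sf_small // ?(ltnW hl).
- move=> l hl; apply/matrixP => i j; rewrite bias_mxE mxE.
  have [Hs Hd] := const_ok hl.
  have hdl : (d l < n l)%N by rewrite aug_dimsE hl.
  have Eb : forall (bb : forall l, 'cV[R]_(d l.+1)) (WW : forall l, 'M[R]_(d l.+1, d l)) (i : nat),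
      (i < d l.+1)%N -> entry (aug_weights L WW bb l) i (d l) = entry (bb l) i 0.
    by move=> bb WW i' hi'; rewrite entry_aug aug_n // hdl /augG hi' ltnn.
  have -> : j = ord0 by apply: val_inj; case: j => [[]].
  rewrite -entryE -[0%N]/(val (@ord0 0)) -(Eb b' W') // (key hl (aug_n (ltn_ord i)) hdl) Hs Hd expr1n invr1 mulr1.
  rewrite -[b l _ _]entryE spE ?(ltnW hl) // (Eb b W) //.
  by apply: sf_small; rewrite ?(ltnW hl).
Qed.

End Main.

Theorem mainTheorem17 (R : realType) (d r : nat -> nat) (L : nat) (hL : (0 < L)%N)
  (W : forall l, 'M[R]_(d l.+1, d l)) (b : forall l, 'cV[R]_(d l.+1)) :
  hpnn_unique r L (aug_weights L W b) -> pnn_unique r L W b.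
Proof.
move=> Hu W' b' Hp.
have Hf := step1 hL Hp.
have [P [D [Heq Hw]]] := Hu _ Hf.
exact: final Hu Heq Hw.
Qed.
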